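(* Let $X$ and $Y$ be infinite dimensional Banach spaces that are essentially incomparable. Then no compact operator $S\in B(Y)$ is equivalent after extension to any operator $T\in B(X)$.
   Context: All Banach spaces are complex; $B(X,Y)$ denotes bounded linear operators; invertibility means bounded inverse; $X\oplus Y$ is the $\ell^2$-direct sum and $\mathrm{id}_X$ the identity. Operators $T\in B(X)$ and $S\in B(Y)$ are equivalent after extension if there exist Banach spaces $X'$, $Y'$ and invertible $E\in B(Y\oplus Y',X\oplus X')$, $F\in B(X\oplus X',Y\oplus Y')$ with $\begin{bmatrix}T&0\\0&\mathrm{id}_{X'}\end{bmatrix}=E\begin{bmatrix}S&0\\0&\mathrm{id}_{Y'}\end{bmatrix}F$. An operator $S\in B(X,Y)$ is inessential if $\mathrm{id}_X-TS$ is Fredholm for every $T\in B(Y,X)$; $\mathcal J(X,Y)$ denotes the set of inessential operators in $B(X,Y)$. The spaces $X$ and $Y$ are essentially incomparable if $B(X,Y)=\mathcal J(X,Y)$ (equivalently, $B(Y,X)=\mathcal J(Y,X)$). *)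

(* Defs.v *)
From Stdlib Require Import Reals List.
Open Scope R_scope.

Definition C : Type := (R * R)%type.
Definition C0 : C := (0, 0).
Definition C1 : C := (1, 0).
Definition Cadd (a b : C) : C := (fst a + fst b, snd a + snd b).
Definition Cmul (a b : C) : C :=
  (fst a * fst b - snd a * snd b, fst a * snd b + snd a * fst b).
Definition Copp (a : C) : C := (- fst a, - snd a).
Definition Cmod (a : C) : R := sqrt (fst a ^ 2 + snd a ^ 2).

(** A "pre-normed" complex space: carrier with vector operations and a norm
    function, no axioms.  Axioms are imposed by [Banach] below. *)
Record NSpace := {
  car :> Type;
  vzero : car;
  vadd : car -> car -> car;
  vopp : car -> car;
  vscal : C -> car -> car;
  vnorm : car -> R }.

Arguments vzero {_}.
Arguments vadd {_} _ _.
Arguments vopp {_} _.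
Arguments vscal {_} _ _.
Arguments vnorm {_} _.

Definition vsub {X : NSpace} (x y : X) : X := vadd x (vopp y).

Definition cauchy {X : NSpace} (u : nat -> X) : Prop :=
  forall eps, 0 < eps -> exists N, forall m n, (N <= m)%nat -> (N <= n)%nat ->
    vnorm (vsub (u m) (u n)) < eps.

Definition converges_to {X : NSpace} (u : nat -> X) (l : X) : Prop :=
  forall eps, 0 < eps -> exists N, forall n, (N <= n)%nat -> vnorm (vsub (u n) l) < eps.

Definition Banach (X : NSpace) : Prop :=
  (forall x y z : X, vadd x (vadd y z) = vadd (vadd x y) z) /\
  (forall x y : X, vadd x y = vadd y x) /\
  (forall x : X, vadd x vzero = x) /\
  (forall x : X, vadd x (vopp x) = vzero) /\
  (forall (a : C) (x y : X), vscal a (vadd x y) = vadd (vscal a x) (vscal a y)) /\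
  (forall (a b : C) (x : X), vscal (Cadd a b) x = vadd (vscal a x) (vscal b x)) /\
  (forall (a b : C) (x : X), vscal (Cmul a b) x = vscal a (vscal b x)) /\
  (forall x : X, vscal C1 x = x) /\
  (forall x : X, vnorm x = 0 -> x = vzero) /\
  (forall x y : X, vnorm (vadd x y) <= vnorm x + vnorm y) /\
  (forall (a : C) (x : X), vnorm (vscal a x) = Cmod a * vnorm x) /\
  (forall u : nat -> X, cauchy u -> exists l, converges_to u l).

Definition lincomb {X : NSpace} (cs : list C) (vs : list X) : X :=
  fold_right (fun p acc => vadd (vscal (fst p) (snd p)) acc) vzero (combine cs vs).

Definition finite_dim_sub {X : NSpace} (S : X -> Prop) : Prop :=
  exists vs : list X, Forall S vs /\
    forall x, S x -> exists cs : list C, x = lincomb cs vs.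

Definition infinite_dim (X : NSpace) : Prop := ~ finite_dim_sub (fun _ : X => True).

Definition is_linear {X Y : NSpace} (f : X -> Y) : Prop :=
  (forall x y, f (vadd x y) = vadd (f x) (f y)) /\
  (forall (a : C) x, f (vscal a x) = vscal a (f x)).

Definition is_bounded {X Y : NSpace} (f : X -> Y) : Prop :=
  exists M, forall x, vnorm (f x) <= M * vnorm x.

Definition bop {X Y : NSpace} (f : X -> Y) : Prop := is_linear f /\ is_bounded f.

Definition invertible {X Y : NSpace} (f : X -> Y) : Prop :=
  bop f /\ exists g : Y -> X, bop g /\ (forall y, f (g y) = y) /\ (forall x, g (f x) = x).

Definition closed_range {X Y : NSpace} (f : X -> Y) : Prop :=
  forall (u : nat -> X) (y : Y), converges_to (fun n => f (u n)) y -> exists x, f x = y.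

Definition finite_codim_range {X Y : NSpace} (f : X -> Y) : Prop :=
  exists vs : list Y, forall y, exists x cs, y = vadd (f x) (lincomb cs vs).

Definition fredholm {X Y : NSpace} (f : X -> Y) : Prop :=
  bop f /\ finite_dim_sub (fun x => f x = vzero) /\ closed_range f /\
  finite_codim_range f.

Definition inessential {X Y : NSpace} (S : X -> Y) : Prop :=
  bop S /\ forall T : Y -> X, bop T -> fredholm (fun x => vsub x (T (S x))).

Definition ess_incomparable (X Y : NSpace) : Prop :=
  forall S : X -> Y, bop S -> inessential S.

Definition compact_op {X Y : NSpace} (S : X -> Y) : Prop :=
  bop S /\ forall u : nat -> X, (exists M, forall n, vnorm (u n) <= M) ->
    exists (phi : nat -> nat) (l : Y),
      (forall n, (phi n < phi (Nat.succ n))%nat) /\ converges_to (fun n => S (u (phi n))) l.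

Definition dsum (X Y : NSpace) : NSpace := {|
  car := (car X * car Y)%type;
  vzero := (vzero, vzero);
  vadd := fun p q => (vadd (fst p) (fst q), vadd (snd p) (snd q));
  vopp := fun p => (vopp (fst p), vopp (snd p));
  vscal := fun a p => (vscal a (fst p), vscal a (snd p));
  vnorm := fun p => sqrt (vnorm (fst p) ^ 2 + vnorm (snd p) ^ 2) |}.

Definition diag_id {X : NSpace} (X' : NSpace) (T : X -> X) : dsum X X' -> dsum X X' :=
  fun p => (T (fst p), snd p).

Definition equiv_after_ext {X Y : NSpace} (T : X -> X) (S : Y -> Y) : Prop :=
  exists (X' Y' : NSpace), Banach X' /\ Banach Y' /\
    exists (E : dsum Y Y' -> dsum X X') (F : dsum X X' -> dsum Y Y'),
      invertible E /\ invertible F /\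
      forall p : dsum X X', diag_id X' T p = E (diag_id Y' S (F p)).

(* Main.v *)
Require Import Defs.
From Stdlib Require Import Reals List.
From Stdlib Require Import Lra Lia ZArith ClassicalEpsilon Classical.
Import Defs.
Open Scope R_scope.


Lemma B_assoc {X : NSpace} (HX : Banach X) (x y z : X) : vadd x (vadd y z) = vadd (vadd x y) z.
Proof. destruct HX as [H [? [? [? [? [? [? [? [? [? [? ?]]]]]]]]]]]; apply H. Qed.
Lemma B_comm {X : NSpace} (HX : Banach X) (x y : X) : vadd x y = vadd y x.
Proof. destruct HX as [? [H [? [? [? [? [? [? [? [? [? ?]]]]]]]]]]]; apply H. Qed.
Lemma B_add0 {X : NSpace} (HX : Banach X) (x : X) : vadd x vzero = x.
Proof. destruct HX as [? [? [H [? [? [? [? [? [? [? [? ?]]]]]]]]]]]; apply H. Qed.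
Lemma B_addN {X : NSpace} (HX : Banach X) (x : X) : vadd x (vopp x) = vzero.
Proof. destruct HX as [? [? [? [H [? [? [? [? [? [? [? ?]]]]]]]]]]]; apply H. Qed.
Lemma B_scalD {X : NSpace} (HX : Banach X) a (x y : X) : vscal a (vadd x y) = vadd (vscal a x) (vscal a y).
Proof. destruct HX as [? [? [? [? [H [? [? [? [? [? [? ?]]]]]]]]]]]; apply H. Qed.
Lemma B_scalDl {X : NSpace} (HX : Banach X) a b (x : X) : vscal (Cadd a b) x = vadd (vscal a x) (vscal b x).
Proof. destruct HX as [? [? [? [? [? [H [? [? [? [? [? ?]]]]]]]]]]]; apply H. Qed.
Lemma B_scalM {X : NSpace} (HX : Banach X) a b (x : X) : vscal (Cmul a b) x = vscal a (vscal b x).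
Proof. destruct HX as [? [? [? [? [? [? [H [? [? [? [? ?]]]]]]]]]]]; apply H. Qed.
Lemma B_scal1 {X : NSpace} (HX : Banach X) (x : X) : vscal C1 x = x.
Proof. destruct HX as [? [? [? [? [? [? [? [H [? [? [? ?]]]]]]]]]]]; apply H. Qed.
Lemma B_norm0 {X : NSpace} (HX : Banach X) (x : X) : vnorm x = 0 -> x = vzero.
Proof. destruct HX as [? [? [? [? [? [? [? [? [H [? [? ?]]]]]]]]]]]; apply H. Qed.
Lemma B_tri {X : NSpace} (HX : Banach X) (x y : X) : vnorm (vadd x y) <= vnorm x + vnorm y.
Proof. destruct HX as [? [? [? [? [? [? [? [? [? [H [? ?]]]]]]]]]]]; apply H. Qed.
Lemma B_normZ {X : NSpace} (HX : Banach X) a (x : X) : vnorm (vscal a x) = Cmod a * vnorm x.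
Proof. destruct HX as [? [? [? [? [? [? [? [? [? [? [H ?]]]]]]]]]]]; apply H. Qed.
Lemma B_complete {X : NSpace} (HX : Banach X) (u : nat -> X) : cauchy u -> exists l, converges_to u l.
Proof. destruct HX as [? [? [? [? [? [? [? [? [? [? [? H]]]]]]]]]]]; apply H. Qed.

Lemma B_add0l {X : NSpace} (HX : Banach X) (x : X) : vadd vzero x = x.
Proof. rewrite (B_comm HX). apply B_add0; auto. Qed.

Lemma B_cancel {X : NSpace} (HX : Banach X) (x y z : X) : vadd x y = vadd x z -> y = z.
Proof.
  intro H. assert (H2 : vadd (vopp x) (vadd x y) = vadd (vopp x) (vadd x z)) by (rewrite H; auto).
  rewrite !(B_assoc HX) in H2. rewrite (B_comm HX (vopp x) x), (B_addN HX), !(B_add0l HX) in H2. exact H2.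
Qed.

Lemma B_oppu {X : NSpace} (HX : Banach X) (x y : X) : vadd x y = vzero -> y = vopp x.
Proof. intro H. apply (B_cancel HX x). rewrite H, (B_addN HX). auto. Qed.

Lemma B_oppK {X : NSpace} (HX : Banach X) (x : X) : vopp (vopp x) = x.
Proof. symmetry. apply (B_oppu HX). rewrite (B_comm HX). apply B_addN; auto. Qed.

Lemma B_opp0 {X : NSpace} (HX : Banach X) : vopp (@vzero X) = vzero.
Proof. symmetry. apply (B_oppu HX). apply B_add0; auto. Qed.

Lemma B_oppD {X : NSpace} (HX : Banach X) (x y : X) : vopp (vadd x y) = vadd (vopp x) (vopp y).
Proof.
  symmetry. apply (B_oppu HX).
  rewrite <- (B_assoc HX), (B_assoc HX y), (B_comm HX y), <- (B_assoc HX), (B_addN HX), (B_add0 HX), (B_addN HX).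
  auto.
Qed.

Lemma B_scal0v {X : NSpace} (HX : Banach X) (x : X) : vscal C0 x = vzero.
Proof.
  assert (E : C0 = Cadd C0 C0) by (unfold C0, Cadd; simpl; f_equal; ring).
  apply (B_cancel HX (vscal C0 x)). rewrite (B_add0 HX). rewrite <- (B_scalDl HX), <- E. auto.
Qed.

Lemma B_scalv0 {X : NSpace} (HX : Banach X) a : vscal a (@vzero X) = vzero.
Proof.
  apply (B_cancel HX (vscal a vzero)). rewrite (B_add0 HX), <- (B_scalD HX), (B_add0 HX). auto.
Qed.

Lemma B_scalN1 {X : NSpace} (HX : Banach X) (x : X) : vscal (Copp C1) x = vopp x.
Proof.
  apply (B_oppu HX). rewrite <- (B_scal1 HX x) at 1. rewrite <- (B_scalDl HX).
  replace (Cadd C1 (Copp C1)) with C0 by (unfold C0, C1, Cadd, Copp; simpl; f_equal; ring).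
  apply B_scal0v; auto.
Qed.

Lemma B_scalN {X : NSpace} (HX : Banach X) a (x : X) : vscal (Copp a) x = vopp (vscal a x).
Proof.
  replace (Copp a) with (Cmul (Copp C1) a) by (destruct a; unfold Cmul, Copp, C1; simpl; f_equal; ring).
  rewrite (B_scalM HX). apply B_scalN1; auto.
Qed.

Lemma B_scalopp {X : NSpace} (HX : Banach X) a (x : X) : vscal a (vopp x) = vopp (vscal a x).
Proof.
  rewrite <- (B_scalN1 HX x), <- (B_scalM HX).
  replace (Cmul a (Copp C1)) with (Copp a) by (destruct a; unfold Cmul, Copp, C1; simpl; f_equal; ring).
  apply B_scalN; auto.
Qed.

Lemma B_scalsub {X : NSpace} (HX : Banach X) a (x y : X) : vscal a (vsub x y) = vsub (vscal a x) (vscal a y).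
Proof. unfold vsub. rewrite (B_scalD HX), (B_scalopp HX). auto. Qed.

Lemma Cmod_C0 : Cmod C0 = 0.
Proof. unfold Cmod, C0, fst, snd. replace (0 ^ 2 + 0 ^ 2) with 0 by ring. apply sqrt_0. Qed.

Lemma Cmod_ge0 a : 0 <= Cmod a.
Proof. unfold Cmod. apply sqrt_pos. Qed.

Definition rs (t : R) : C := (t, 0).

Lemma Cmod_rs t : Cmod (rs t) = Rabs t.
Proof. unfold Cmod, rs, fst, snd. replace (t ^ 2 + 0 ^ 2) with (Rsqr t) by (unfold Rsqr; ring). apply sqrt_Rsqr_abs. Qed.
Lemma Cmod_rs_abs t : Cmod (rs t) = Rabs t.
Proof. apply Cmod_rs. Qed.

Lemma Cmod_Copp a : Cmod (Copp a) = Cmod a.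
Proof. destruct a; unfold Cmod, Copp, fst, snd. f_equal. ring. Qed.

Lemma B_vnorm_zero {X : NSpace} (HX : Banach X) : vnorm (@vzero X) = 0.
Proof. rewrite <- (B_scal0v HX vzero), (B_normZ HX), Cmod_C0. ring. Qed.

Lemma B_norm_opp {X : NSpace} (HX : Banach X) (x : X) : vnorm (vopp x) = vnorm x.
Proof.
  rewrite <- (B_scalN1 HX), (B_normZ HX), Cmod_Copp.
  replace (Cmod C1) with 1. ring.
  unfold Cmod, C1, fst, snd. replace (1 ^ 2 + 0 ^ 2) with 1 by ring. symmetry; apply sqrt_1.
Qed.

Lemma B_norm_ge0 {X : NSpace} (HX : Banach X) (x : X) : 0 <= vnorm x.
Proof.
  pose proof (B_tri HX x (vopp x)) as H. rewrite (B_addN HX), (B_vnorm_zero HX), (B_norm_opp HX) in H. lra.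
Qed.

Lemma B_scal_rs {X : NSpace} (HX : Banach X) t (x : X) : vnorm (vscal (rs t) x) = Rabs t * vnorm x.
Proof. rewrite (B_normZ HX), Cmod_rs. auto. Qed.

Lemma rs_mul a b : Cmul (rs a) (rs b) = rs (a * b).
Proof. unfold Cmul, rs; simpl; f_equal; ring. Qed.
Lemma rs_add a b : Cadd (rs a) (rs b) = rs (a + b).
Proof. unfold Cadd, rs; simpl; f_equal; ring. Qed.
Lemma rs_1 : rs 1 = C1.
Proof. reflexivity. Qed.
Lemma rs_0 : rs 0 = C0.
Proof. reflexivity. Qed.

Inductive gexp := GAtom (n : nat) | GZero | GAdd (a b : gexp) | GOpp (a : gexp).

Fixpoint geval {X : NSpace} (env : list X) (e : gexp) : X :=
  match e with
  | GAtom n => nth n env vzero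
  | GZero => vzero
  | GAdd a b => vadd (geval env a) (geval env b)
  | GOpp a => vopp (geval env a)
  end.

Fixpoint zadd (l1 l2 : list Z) : list Z :=
  match l1, l2 with
  | a :: l1', b :: l2' => (a + b)%Z :: zadd l1' l2'
  | nil, l => l
  | l, nil => l
  end.

Fixpoint zunit (n : nat) : list Z := match n with O => 1%Z :: nil | S n => 0%Z :: zunit n end.

Fixpoint gnorm (e : gexp) : list Z :=
  match e with
  | GAtom n => zunit n
  | GZero => nil
  | GAdd a b => zadd (gnorm a) (gnorm b)
  | GOpp a => map Z.opp (gnorm a)
  end.

Fixpoint nfeval {X : NSpace} (env : list X) (zs : list Z) : X :=
  match env, zs with
  | v :: env', z :: zs' => vadd (vscal (rs (IZR z)) v) (nfeval env' zs')
  | _, _ => vzero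
  end.

Lemma nfeval_nil {X : NSpace} (env : list X) : nfeval env nil = vzero.
Proof. destruct env; reflexivity. Qed.

Lemma nfeval_add {X : NSpace} (HX : Banach X) (env : list X) : forall l1 l2,
  nfeval env (zadd l1 l2) = vadd (nfeval env l1) (nfeval env l2).
Proof.
  induction env as [|v env IH]; intros l1 l2; simpl.
  - rewrite (B_add0 HX). auto.
  - destruct l1 as [|a l1]; destruct l2 as [|b l2]; simpl.
    + rewrite (B_add0 HX); auto.
    + rewrite (B_add0l HX); auto.
    + rewrite (B_add0 HX); auto.
    + rewrite IH, plus_IZR, <- rs_add, (B_scalDl HX).
      rewrite <- !(B_assoc HX). f_equal. rewrite !(B_assoc HX). f_equal. apply B_comm; auto.
Qed.

Lemma nfeval_opp {X : NSpace} (HX : Banach X) (env : list X) : forall l,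
  nfeval env (map Z.opp l) = vopp (nfeval env l).
Proof.
  induction env as [|v env IH]; intros l; simpl.
  - destruct l; simpl; symmetry; apply B_opp0; auto.
  - destruct l as [|a l]; simpl.
    + symmetry; apply B_opp0; auto.
    + rewrite IH, (B_oppD HX), opp_IZR. f_equal.
      replace (rs (- IZR a)) with (Copp (rs (IZR a))) by (unfold Copp, rs; simpl; f_equal; ring).
      apply B_scalN; auto.
Qed.

Lemma nfeval_unit {X : NSpace} (HX : Banach X) (env : list X) : forall n,
  nfeval env (zunit n) = nth n env vzero.
Proof.
  induction env as [|v env IH]; intros n; simpl.
  - destruct n; reflexivity.
  - destruct n as [|n]; simpl.
    + rewrite nfeval_nil, (B_add0 HX). apply B_scal1; auto.
    + rewrite IH. replace (rs (IZR 0)) with C0 by reflexivity. rewrite (B_scal0v HX). apply B_add0l; auto.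
Qed.

Lemma gnorm_sound {X : NSpace} (HX : Banach X) (env : list X) e : geval env e = nfeval env (gnorm e).
Proof.
  induction e; simpl.
  - symmetry; apply nfeval_unit; auto.
  - rewrite nfeval_nil; auto.
  - rewrite (nfeval_add HX), IHe1, IHe2. auto.
  - rewrite (nfeval_opp HX), IHe. auto.
Qed.

Lemma nfeval_zeros {X : NSpace} (HX : Banach X) (env : list X) : forall l,
  forallb (Z.eqb 0) l = true -> nfeval env l = vzero.
Proof.
  induction env as [|v env IH]; intros l H; simpl.
  - destruct l; auto.
  - destruct l as [|a l]; auto. simpl in H. apply andb_prop in H. destruct H as [H1 H2].
    destruct a; try discriminate. rewrite IH; auto. replace (rs (IZR 0)) with C0 by reflexivity.
    rewrite (B_scal0v HX). apply B_add0; auto.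
Qed.

Lemma grp_sound {X : NSpace} (HX : Banach X) (env : list X) e1 e2 :
  forallb (Z.eqb 0) (zadd (gnorm e1) (map Z.opp (gnorm e2))) = true ->
  geval env e1 = geval env e2.
Proof.
  intro H. pose proof (nfeval_zeros HX env _ H) as H0.
  rewrite (nfeval_add HX), (nfeval_opp HX), <- !(gnorm_sound HX) in H0.
  apply (B_oppu HX) in H0. apply (f_equal vopp) in H0. rewrite !(B_oppK HX) in H0. auto.
Qed.

Ltac addAtom x l :=
  match l with
  | context [cons x _] => l
  | _ => constr:(cons x l)
  end.

Ltac collect t l :=
  match t with
  | vadd ?a ?b => let l := collect a l in collect b l
  | vsub ?a ?b => let l := collect a l in collect b l
  | vopp ?a => collect a l
  | vzero => l
  | _ => addAtom t l
  end.

Ltac index x l :=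
  match l with
  | cons x _ => constr:(O)
  | cons _ ?l' => let n := index x l' in constr:(S n)
  end.

Ltac reify t l :=
  match t with
  | vadd ?a ?b => let ra := reify a l in let rb := reify b l in constr:(GAdd ra rb)
  | vsub ?a ?b => let ra := reify a l in let rb := reify b l in constr:(GAdd ra (GOpp rb))
  | vopp ?a => let ra := reify a l in constr:(GOpp ra)
  | vzero => constr:(GZero)
  | _ => let n := index t l in constr:(GAtom n)
  end.

Ltac grp HX :=
  match goal with
  | |- @eq ?T ?lhs ?rhs =>
    let l0 := constr:(@nil T) in
    let l1 := collect lhs l0 in
    let l := collect rhs l1 in
    let r1 := reify lhs l in
    let r2 := reify rhs l in
    change (geval l r1 = geval l r2);
    apply (grp_sound HX); vm_compute; reflexivity
  end.


Lemma B_norm_sub_sym {X : NSpace} (HX : Banach X) (x y : X) : vnorm (vsub x y) = vnorm (vsub y x).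
Proof. rewrite <- (B_norm_opp HX). f_equal. grp HX. Qed.

Lemma B_tri3 {X : NSpace} (HX : Banach X) (x y z : X) :
  vnorm (vsub x z) <= vnorm (vsub x y) + vnorm (vsub y z).
Proof. replace (vsub x z) with (vadd (vsub x y) (vsub y z)) by grp HX. apply B_tri; auto. Qed.

Lemma B_tri_sub {X : NSpace} (HX : Banach X) (x y : X) : vnorm (vsub x y) <= vnorm x + vnorm y.
Proof. unfold vsub. rewrite <- (B_norm_opp HX y). apply B_tri; auto. Qed.

Lemma B_rev_tri {X : NSpace} (HX : Banach X) (x y : X) : vnorm x - vnorm y <= vnorm (vsub x y).
Proof. pose proof (B_tri HX (vsub x y) y). replace (vadd (vsub x y) y) with x in H by grp HX. lra. Qed.

Lemma B_eq_of_norm {X : NSpace} (HX : Banach X) (x y : X) : vnorm (vsub x y) = 0 -> x = y.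
Proof.
  intro H. apply (B_norm0 HX) in H. apply (B_oppu HX) in H. apply (f_equal vopp) in H.
  rewrite !(B_oppK HX) in H. auto.
Qed.

Lemma B_sub_self {X : NSpace} (HX : Banach X) (x : X) : vsub x x = vzero.
Proof. grp HX. Qed.

Lemma lin_add {X Y : NSpace} (f : X -> Y) : is_linear f -> forall x y, f (vadd x y) = vadd (f x) (f y).
Proof. intros [H _]; auto. Qed.
Lemma lin_scal {X Y : NSpace} (f : X -> Y) : is_linear f -> forall a x, f (vscal a x) = vscal a (f x).
Proof. intros [_ H]; auto. Qed.
Lemma lin_zero {X Y : NSpace} (HX : Banach X) (HY : Banach Y) (f : X -> Y) : is_linear f -> f vzero = vzero.
Proof. intro H. rewrite <- (B_scal0v HX vzero), (lin_scal f H). apply B_scal0v; auto. Qed.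
Lemma lin_opp {X Y : NSpace} (HX : Banach X) (HY : Banach Y) (f : X -> Y) : is_linear f -> forall x, f (vopp x) = vopp (f x).
Proof. intros H x. rewrite <- (B_scalN1 HX), (lin_scal f H). apply B_scalN1; auto. Qed.
Lemma lin_sub {X Y : NSpace} (HX : Banach X) (HY : Banach Y) (f : X -> Y) : is_linear f -> forall x y, f (vsub x y) = vsub (f x) (f y).
Proof. intros H x y. unfold vsub. rewrite (lin_add f H), (lin_opp HX HY f H). auto. Qed.

Lemma bop_bound {X Y : NSpace} (HX : Banach X) (f : X -> Y) : bop f ->
  exists M, 0 <= M /\ forall x, vnorm (f x) <= M * vnorm x.
Proof.
  intros [_ [M HM]]. exists (Rabs M). split. apply Rabs_pos. intro x.
  eapply Rle_trans. apply HM. apply Rmult_le_compat_r. apply (B_norm_ge0 HX). apply RRle_abs.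
Qed.

Lemma bop_cont {X Y : NSpace} (HX : Banach X) (HY : Banach Y) (f : X -> Y) (u : nat -> X) l :
  bop f -> converges_to u l -> converges_to (fun n => f (u n)) (f l).
Proof.
  intros Hf Hu eps Heps. destruct (bop_bound HX f Hf) as [M [HM0 HM]].
  destruct (Hu (eps / (M + 1))) as [N HN]. apply Rdiv_lt_0_compat; lra.
  exists N. intros n Hn. rewrite <- (lin_sub HX HY f (proj1 Hf)).
  eapply Rle_lt_trans. apply HM.
  specialize (HN n Hn). pose proof (B_norm_ge0 HX (vsub (u n) l)).
  apply Rle_lt_trans with ((M + 1) * vnorm (vsub (u n) l)). nra.
  replace eps with ((M + 1) * (eps / (M + 1))) by (field; lra).
  apply Rmult_lt_compat_l; lra.
Qed.

Lemma lim_unique {X : NSpace} (HX : Banach X) (u : nat -> X) l1 l2 :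
  converges_to u l1 -> converges_to u l2 -> l1 = l2.
Proof.
  intros H1 H2. apply (B_eq_of_norm HX).
  destruct (Req_dec (vnorm (vsub l1 l2)) 0) as [E|E]; auto. exfalso.
  pose proof (B_norm_ge0 HX (vsub l1 l2)) as G.
  set (d := vnorm (vsub l1 l2)) in *.
  assert (Hd : 0 < d) by (destruct G as [G|G]; auto; exfalso; apply E; auto).
  destruct (H1 (d/2)) as [N1 HN1]; [lra|]. destruct (H2 (d/2)) as [N2 HN2]; [lra|].
  specialize (HN1 (max N1 N2) (Nat.le_max_l _ _)). specialize (HN2 (max N1 N2) (Nat.le_max_r _ _)).
  pose proof (B_tri3 HX l1 (u (max N1 N2)) l2). rewrite (B_norm_sub_sym HX l1 (u _)) in H. unfold d in *. lra.
Qed.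

Lemma lim_norm_le {X : NSpace} (HX : Banach X) (u : nat -> X) l c :
  (forall n, vnorm (u n) <= c) -> converges_to u l -> vnorm l <= c.
Proof.
  intros Hb Hl. apply Rnot_lt_le. intro Hc.
  destruct (Hl (vnorm l - c)) as [N HN]; [lra|]. specialize (HN N (le_n _)).
  pose proof (B_rev_tri HX l (u N)). rewrite (B_norm_sub_sym HX) in H. specialize (Hb N). lra.
Qed.

Lemma lim_dist_le {X : NSpace} (HX : Banach X) (u : nat -> X) l z c N :
  (forall n, (N <= n)%nat -> vnorm (vsub (u n) z) <= c) -> converges_to u l -> vnorm (vsub l z) <= c.
Proof.
  intros Hb Hl. apply Rnot_lt_le. intro Hc.
  destruct (Hl (vnorm (vsub l z) - c)) as [N' HN]; [lra|]. specialize (HN (max N N') (Nat.le_max_r _ _)).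
  pose proof (B_tri3 HX l (u (max N N')) z). rewrite (B_norm_sub_sym HX l (u _)) in H.
  specialize (Hb (max N N') (Nat.le_max_l _ _)). lra.
Qed.

Lemma nat_above (r : R) : exists n : nat, r < INR n.
Proof.
  destruct (archimed r) as [H1 _].
  destruct (Z_le_gt_dec 0 (up r)) as [Hz|Hz].
  - exists (Z.to_nat (up r)). rewrite INR_IZR_INZ, Z2Nat.id; auto.
  - exists O. simpl. apply Rlt_trans with (IZR (up r)); auto. apply IZR_lt. lia.
Qed.

Lemma small_inv (eps : R) : 0 < eps -> exists N : nat, forall n, (N <= n)%nat -> / (INR n + 1) < eps.
Proof.
  intro He. destruct (nat_above (/ eps)) as [N HN]. exists N. intros n Hn.
  apply le_INR in Hn. pose proof (pos_INR N).
  rewrite <- (Rinv_inv eps). apply Rinv_lt_contravar.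
  apply Rmult_lt_0_compat; [apply Rinv_0_lt_compat|]; lra. lra.
Qed.

Lemma geom_small (eps : R) : 0 < eps -> exists N : nat, forall n, (N <= n)%nat -> (/2) ^ n < eps.
Proof.
  intro He. destruct (pow_lt_1_zero (/2)) with (y := eps) as [N HN]; auto.
  rewrite Rabs_pos_eq; lra. exists N. intros n Hn.
  specialize (HN n Hn). rewrite Rabs_pos_eq in HN; auto. apply pow_le; lra.
Qed.

Fixpoint spanP {X : NSpace} (l : list X) (y : X) : Prop :=
  match l with
  | nil => y = vzero
  | v :: l' => exists c w, spanP l' w /\ y = vadd (vscal c v) w
  end.

Lemma span_zero {X : NSpace} (HX : Banach X) (l : list X) : spanP l vzero.
Proof.
  induction l as [|v l IH]; simpl; auto. exists C0, vzero. split; auto.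
  rewrite (B_scal0v HX). symmetry. apply B_add0; auto.
Qed.

Lemma span_add {X : NSpace} (HX : Banach X) (l : list X) : forall x y, spanP l x -> spanP l y -> spanP l (vadd x y).
Proof.
  induction l as [|v l IH]; simpl; intros x y Hx Hy.
  - subst. apply B_add0; auto.
  - destruct Hx as [c [w [Hw ->]]]. destruct Hy as [c' [w' [Hw' ->]]].
    exists (Cadd c c'), (vadd w w'). split; auto. rewrite (B_scalDl HX). grp HX.
Qed.

Lemma span_scal {X : NSpace} (HX : Banach X) (l : list X) : forall a x, spanP l x -> spanP l (vscal a x).
Proof.
  induction l as [|v l IH]; simpl; intros a x Hx.
  - subst. apply B_scalv0; auto.
  - destruct Hx as [c [w [Hw ->]]]. exists (Cmul a c), (vscal a w). split; auto.
    rewrite (B_scalD HX), (B_scalM HX). auto.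
Qed.

Lemma span_opp {X : NSpace} (HX : Banach X) (l : list X) x : spanP l x -> spanP l (vopp x).
Proof. intro H. rewrite <- (B_scalN1 HX). apply span_scal; auto. Qed.

Lemma span_sub {X : NSpace} (HX : Banach X) (l : list X) x y : spanP l x -> spanP l y -> spanP l (vsub x y).
Proof. intros. unfold vsub. apply span_add; auto. apply span_opp; auto. Qed.

Lemma span_in {X : NSpace} (HX : Banach X) (l : list X) v : In v l -> spanP l v.
Proof.
  induction l as [|a l IH]; simpl; intros H; [contradiction|].
  destruct H as [<-|H].
  - exists C1, vzero. split. apply span_zero; auto. rewrite (B_scal1 HX), (B_add0 HX). auto.
  - exists C0, v. split; auto. rewrite (B_scal0v HX), (B_add0l HX). auto.
Qed.

Lemma span_app {X : NSpace} (HX : Banach X) (l l' : list X) y : spanP l y -> spanP (l ++ l') y.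
Proof.
  revert y. induction l as [|v l IH]; simpl; intros y H.
  - subst. apply span_zero; auto.
  - destruct H as [c [w [Hw ->]]]. exists c, w. auto.
Qed.

Lemma span_lincomb {X : NSpace} (HX : Banach X) (l : list X) : forall cs, spanP l (lincomb cs l).
Proof.
  induction l as [|v l IH]; intros cs.
  - destruct cs; simpl; reflexivity.
  - destruct cs as [|c cs].
    + apply span_zero; auto.
    + simpl. exists c, (lincomb cs l). split; auto.
Qed.

Lemma span_lincomb_inv {X : NSpace} (HX : Banach X) (l : list X) : forall y, spanP l y -> exists cs, y = lincomb cs l.
Proof.
  induction l as [|v l IH]; simpl; intros y H.
  - exists nil. subst. reflexivity.
  - destruct H as [c [w [Hw ->]]]. destruct (IH w Hw) as [cs ->]. exists (c :: cs). reflexivity.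
Qed.

Lemma lincomb_map {X Y : NSpace} (HX : Banach X) (HY : Banach Y) (f : X -> Y) : is_linear f ->
  forall (l : list X) cs, f (lincomb cs l) = lincomb cs (map f l).
Proof.
  intros Hf. induction l as [|v l IH]; intros cs.
  - destruct cs; simpl; apply (lin_zero HX HY f Hf).
  - destruct cs as [|c cs]; simpl.
    + apply (lin_zero HX HY f Hf).
    + change (f (vadd (vscal c v) (lincomb cs l)) = vadd (vscal c (f v)) (lincomb cs (map f l))).
      rewrite (lin_add f Hf), (lin_scal f Hf), IH. auto.
Qed.

Definition closedP {X : NSpace} (W : X -> Prop) : Prop :=
  forall (u : nat -> X) y, (forall n, W (u n)) -> converges_to u y -> W y.

Lemma dist_pos {X : NSpace} (HX : Banach X) (W : X -> Prop) y :
  closedP W -> ~ W y -> exists d, 0 < d /\ forall w, W w -> d <= vnorm (vsub y w).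
Proof.
  intros Hc Hy. apply NNPP. intro Hn.
  assert (Hex : forall n : nat, exists w, W w /\ vnorm (vsub y w) < / (INR n + 1)).
  { intro n. apply NNPP. intro Hn2. apply Hn. exists (/ (INR n + 1)). split.
    apply Rinv_0_lt_compat. pose proof (pos_INR n). lra.
    intros w Hw. apply Rnot_lt_le. intro Hlt. apply Hn2. exists w. auto. }
  set (u := fun n => epsilon (inhabits vzero) (fun w => W w /\ vnorm (vsub y w) < / (INR n + 1))).
  assert (Hu : forall n, W (u n) /\ vnorm (vsub y (u n)) < / (INR n + 1)).
  { intro n. unfold u. apply epsilon_spec. apply Hex. }
  apply Hy. apply (Hc u). intro n; apply Hu.
  intros eps He. destruct (small_inv eps He) as [N HN]. exists N. intros n Hn3.
  rewrite (B_norm_sub_sym HX). destruct (Hu n) as [_ H]. specialize (HN n Hn3). lra.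
Qed.

Definition Cinv (c : C) : C :=
  (fst c / (fst c ^ 2 + snd c ^ 2), - snd c / (fst c ^ 2 + snd c ^ 2)).
Definition Csub (a b : C) : C := Cadd a (Copp b).

Lemma Cmul_inv (c : C) : c <> C0 -> Cmul c (Cinv c) = C1.
Proof.
  destruct c as [a b]; intro H. unfold Cmul, Cinv, C1, fst, snd.
  assert (Hp : a ^ 2 + b ^ 2 <> 0).
  { intro E. apply H. unfold C0. assert (a = 0) by nra. assert (b = 0) by nra. subst; auto. }
  f_equal; field; auto.
Qed.

Lemma Cmod_fst (c : C) : Rabs (fst c) <= Cmod c.
Proof.
  destruct c as [a b]. unfold Cmod, fst, snd. rewrite <- sqrt_Rsqr_abs. apply sqrt_le_1_alt.
  unfold Rsqr. nra.
Qed.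
Lemma Cmod_snd (c : C) : Rabs (snd c) <= Cmod c.
Proof.
  destruct c as [a b]. unfold Cmod, fst, snd. rewrite <- sqrt_Rsqr_abs. apply sqrt_le_1_alt.
  unfold Rsqr. nra.
Qed.
Lemma Cmod_le (c : C) : Cmod c <= Rabs (fst c) + Rabs (snd c).
Proof.
  destruct c as [a b]. unfold Cmod, fst, snd.
  rewrite <- (sqrt_Rsqr (Rabs a + Rabs b)).
  2:{ pose proof (Rabs_pos a); pose proof (Rabs_pos b); lra. }
  apply sqrt_le_1_alt. unfold Rsqr.
  pose proof (Rabs_pos a); pose proof (Rabs_pos b).
  replace (a ^ 2) with (Rabs a * Rabs a) by (rewrite <- Rabs_mult; simpl; rewrite Rmult_1_r; apply Rabs_pos_eq; nra).
  replace (b ^ 2) with (Rabs b * Rabs b) by (rewrite <- Rabs_mult; simpl; rewrite Rmult_1_r; apply Rabs_pos_eq; nra).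
  nra.
Qed.

Lemma B_scal_Csub {X : NSpace} (HX : Banach X) a b (v : X) : vscal (Csub a b) v = vsub (vscal a v) (vscal b v).
Proof. unfold Csub, vsub. rewrite (B_scalDl HX), (B_scalN HX). auto. Qed.

Lemma coef_bound {X : NSpace} (HX : Banach X) (l : list X) v d :
  (forall w, spanP l w -> d <= vnorm (vsub v w)) ->
  forall c w, spanP l w -> Cmod c * d <= vnorm (vadd (vscal c v) w).
Proof.
  intros Hd c w Hw. destruct (classic (c = C0)) as [E|E].
  - subst. rewrite Cmod_C0, Rmult_0_l. apply B_norm_ge0; auto.
  - set (ci := Cinv c).
    replace (vadd (vscal c v) w) with (vscal c (vsub v (vopp (vscal ci w)))).
    + rewrite (B_normZ HX). apply Rmult_le_compat_l. apply Cmod_ge0. apply Hd.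
      apply span_opp; auto. apply span_scal; auto.
    + rewrite (B_scalsub HX), (B_scalopp HX), <- (B_scalM HX). unfold ci. rewrite Cmul_inv; auto.
      rewrite (B_scal1 HX). grp HX.
Qed.

Lemma span_closed {X : NSpace} (HX : Banach X) (l : list X) : closedP (spanP l).
Proof.
  induction l as [|v l IH]; intros u y Hu Hc.
  - simpl in *. symmetry. apply (B_eq_of_norm HX).
    apply Rle_antisym; [|apply B_norm_ge0; auto]. apply Rnot_lt_le. intro H.
    destruct (Hc _ H) as [N HN]. specialize (HN N (le_n _)). rewrite (Hu N) in HN.
    rewrite (B_norm_sub_sym HX) in HN. lra.
  - destruct (classic (spanP l v)) as [Hv|Hv].
    + assert (Hu' : forall n, spanP l (u n)).
      { intro n. destruct (Hu n) as [c [w [Hw ->]]]. apply span_add; auto. apply span_scal; auto. }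
      pose proof (IH u y Hu' Hc) as Hy. simpl. exists C0, y. split; auto.
      rewrite (B_scal0v HX), (B_add0l HX). auto.
    + destruct (dist_pos HX (spanP l) v IH Hv) as [d [Hd0 Hd]].
      set (cw := fun n => epsilon (inhabits (C0, @vzero X))
                 (fun p => spanP l (snd p) /\ u n = vadd (vscal (fst p) v) (snd p))).
      assert (Hcw : forall n, spanP l (snd (cw n)) /\ u n = vadd (vscal (fst (cw n)) v) (snd (cw n))).
      { intro n. unfold cw. apply (epsilon_spec (inhabits (C0, @vzero X))
          (fun p => spanP l (snd p) /\ u n = vadd (vscal (fst p) v) (snd p))).
        destruct (Hu n) as [c [w [Hw E]]]. exists (c, w). simpl. auto. }
      set (c := fun n => fst (cw n)). set (w := fun n => snd (cw n)).
      assert (Hcm : forall eps, 0 < eps -> exists N, forall n m, (N <= n)%nat -> (N <= m)%nat ->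
                 Cmod (Csub (c n) (c m)) < eps).
      { intros eps He. destruct (Hc (eps * d / 2)) as [N HN].
        { apply Rmult_lt_0_compat; [apply Rmult_lt_0_compat|]; lra. }
        exists N. intros n m Hn Hm.
        pose proof (coef_bound HX l v d Hd (Csub (c n) (c m)) (vsub (w n) (w m))) as Hb.
        assert (Hs : spanP l (vsub (w n) (w m))) by (apply span_sub; auto; apply Hcw).
        specialize (Hb Hs).
        replace (vadd (vscal (Csub (c n) (c m)) v) (vsub (w n) (w m))) with
          (vsub (vsub (u n) y) (vsub (u m) y)) in Hb.
        2:{ rewrite (B_scal_Csub HX). destruct (Hcw n) as [_ En]. destruct (Hcw m) as [_ Em].
            rewrite En, Em. unfold c, w. grp HX. }
        pose proof (B_tri_sub HX (vsub (u n) y) (vsub (u m) y)).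
        pose proof (HN n Hn). pose proof (HN m Hm).
        assert (Cmod (Csub (c n) (c m)) * d < eps * d) by lra.
        apply Rmult_lt_reg_r with d; auto. }
      assert (Hf : Cauchy_crit (fun n => fst (c n))).
      { intros eps He. destruct (Hcm eps He) as [N HN]. exists N. intros n m Hn Hm.
        unfold Rdist. eapply Rle_lt_trans; [|apply (HN n m Hn Hm)].
        eapply Rle_trans; [|apply Cmod_fst]. unfold Csub, Cadd, Copp, fst. right. f_equal. }
      assert (Hs : Cauchy_crit (fun n => snd (c n))).
      { intros eps He. destruct (Hcm eps He) as [N HN]. exists N. intros n m Hn Hm.
        unfold Rdist. eapply Rle_lt_trans; [|apply (HN n m Hn Hm)].
        eapply Rle_trans; [|apply Cmod_snd]. unfold Csub, Cadd, Copp, snd. right. f_equal. }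
      destruct (R_complete _ Hf) as [a Ha]. destruct (R_complete _ Hs) as [b Hb].
      set (c0 := (a, b) : C).
      assert (Hcl : forall eps, 0 < eps -> exists N, forall n, (N <= n)%nat -> Cmod (Csub (c n) c0) < eps).
      { intros eps He. destruct (Ha (eps/2)) as [N1 H1]; [lra|]. destruct (Hb (eps/2)) as [N2 H2]; [lra|].
        exists (max N1 N2). intros n Hn.
        eapply Rle_lt_trans; [apply Cmod_le|].
        assert (n >= N1)%nat by lia. assert (n >= N2)%nat by lia.
        specialize (H1 n H). specialize (H2 n H0). unfold Rdist in *.
        replace (fst (Csub (c n) c0)) with (fst (c n) - a) by (unfold Csub, Cadd, Copp, c0; simpl; ring).
        replace (snd (Csub (c n) c0)) with (snd (c n) - b) by (unfold Csub, Cadd, Copp, c0; simpl; ring).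
        lra. }
      assert (Hw : converges_to w (vsub y (vscal c0 v))).
      { intros eps He. destruct (Hc (eps/2)) as [N1 H1]; [lra|].
        destruct (Hcl (eps / (2 * (vnorm v + 1)))) as [N2 H2].
        { pose proof (B_norm_ge0 HX v). apply Rdiv_lt_0_compat; lra. }
        exists (max N1 N2). intros n Hn.
        replace (vsub (w n) (vsub y (vscal c0 v))) with
          (vsub (vsub (u n) y) (vscal (Csub (c n) c0) v)).
        2:{ rewrite (B_scal_Csub HX). destruct (Hcw n) as [_ En]. rewrite En. unfold c, w. grp HX. }
        eapply Rle_lt_trans. apply B_tri_sub; auto. rewrite (B_normZ HX).
        assert (n >= N1)%nat by lia. assert (n >= N2)%nat by lia.
        specialize (H1 n H). specialize (H2 n H0). pose proof (B_norm_ge0 HX v).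
        pose proof (Cmod_ge0 (Csub (c n) c0)).
        assert (Cmod (Csub (c n) c0) * vnorm v <= eps / (2 * (vnorm v + 1)) * (vnorm v + 1)).
        { apply Rmult_le_compat; lra. }
        replace (eps / (2 * (vnorm v + 1)) * (vnorm v + 1)) with (eps / 2) in H5 by (field; lra).
        lra. }
      assert (Hl : spanP l (vsub y (vscal c0 v))).
      { apply (IH w); auto. intro n. apply Hcw. }
      simpl. exists c0, (vsub y (vscal c0 v)). split; auto. grp HX.
Qed.

Lemma riesz {X : NSpace} (HX : Banach X) (l : list X) y : ~ spanP l y ->
  exists z, vnorm z <= 1 /\ forall w, spanP l w -> 1/2 <= vnorm (vsub z w).
Proof.
  intro Hy. destruct (dist_pos HX (spanP l) y (span_closed HX l) Hy) as [d [Hd0 Hd]].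
  set (E := fun r => forall w, spanP l w -> r <= vnorm (vsub y w)).
  assert (Hb : bound E).
  { exists (vnorm (vsub y vzero)). intros r Hr. apply Hr. apply span_zero; auto. }
  destruct (completeness E Hb) as [m [Hm1 Hm2]]. { exists d. exact Hd. }
  assert (Hdm : d <= m) by (apply Hm1; exact Hd).
  assert (Hmw : forall w, spanP l w -> m <= vnorm (vsub y w)).
  { intros w Hw. apply Hm2. intros r Hr. apply Hr; auto. }
  assert (Hw0 : exists w0, spanP l w0 /\ vnorm (vsub y w0) < 2 * m).
  { apply NNPP. intro Hn. assert (E (2 * m)).
    { intros w Hw. apply Rnot_lt_le. intro Hlt. apply Hn. exists w. auto. }
    apply Hm1 in H. lra. }
  destruct Hw0 as [w0 [Hw0 Hlt]].
  set (rho := vnorm (vsub y w0)) in *.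
  assert (Hrho : m <= rho) by (apply Hmw; auto).
  exists (vscal (rs (/ rho)) (vsub y w0)). split.
  - rewrite (B_scal_rs HX). fold rho. rewrite Rabs_pos_eq. right. field. lra.
    left. apply Rinv_0_lt_compat. lra.
  - intros w Hw.
    replace (vsub (vscal (rs (/ rho)) (vsub y w0)) w) with
      (vscal (rs (/ rho)) (vsub y (vadd w0 (vscal (rs rho) w)))).
    + rewrite (B_scal_rs HX). rewrite Rabs_pos_eq by (left; apply Rinv_0_lt_compat; lra).
      assert (Hin : spanP l (vadd w0 (vscal (rs rho) w))) by (apply span_add; auto; apply span_scal; auto).
      specialize (Hmw _ Hin).
      apply Rle_trans with (/ rho * m).
      * apply Rmult_le_reg_l with rho. lra. rewrite <- Rmult_assoc, Rinv_r, Rmult_1_l by lra. lra.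
      * apply Rmult_le_compat_l; auto. left. apply Rinv_0_lt_compat. lra.
    + rewrite !(B_scalsub HX), (B_scalD HX), <- (B_scalM HX), rs_mul, Rinv_l, rs_1, (B_scal1 HX) by lra.
      grp HX.
Qed.

Lemma riesz_seq {X : NSpace} (HX : Banach X) (L0 : list X) : infinite_dim X ->
  exists y : nat -> X, (forall n, vnorm (y n) <= 1) /\
    forall i j w, (i < j)%nat -> spanP L0 w -> 1/2 <= vnorm (vsub (y j) (vadd (y i) w)).
Proof.
  intro Hinf.
  assert (Hex : forall l : list X, exists z, vnorm z <= 1 /\ forall w, spanP l w -> 1/2 <= vnorm (vsub z w)).
  { intro l. destruct (classic (exists y, ~ spanP l y)) as [[y Hy]|Hn].
    - apply (riesz HX l y Hy).
    - exfalso. apply Hinf. exists l. split.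
      + apply Forall_forall. auto.
      + intros x _. apply (span_lincomb_inv HX). apply NNPP. intro H. apply Hn. exists x. auto. }
  set (pick := fun l : list X => epsilon (inhabits vzero)
          (fun z => vnorm z <= 1 /\ forall w, spanP l w -> 1/2 <= vnorm (vsub z w))).
  assert (Hpick : forall l, vnorm (pick l) <= 1 /\ forall w, spanP l w -> 1/2 <= vnorm (vsub (pick l) w)).
  { intro l. unfold pick. apply epsilon_spec. apply Hex. }
  set (pre := fix pre (k : nat) : list X := match k with O => L0 | S k => pre k ++ (pick (pre k) :: nil) end).
  exists (fun k => pick (pre k)). split.
  - intro n. apply Hpick.
  - assert (Hmono : forall i k x, spanP (pre i) x -> spanP (pre (i + k)%nat) x).
    { intros i k. induction k as [|k IHk]; intros x H.
      - rewrite Nat.add_0_r. auto.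
      - rewrite Nat.add_succ_r. simpl. apply span_app; auto. }
    intros i j w Hij Hw. apply Hpick.
    replace j with (S i + (j - S i))%nat by lia.
    apply span_add; auto.
    + apply Hmono. simpl. apply span_in; auto. apply in_or_app. right. left. auto.
    + apply (Hmono O). simpl. auto.
Qed.

Lemma baire_step {X Y : NSpace} (HX : Banach X) (HY : Banach Y) (V : X -> Y) :
  bop V -> closed_range V ->
  exists (k : nat) z0 r, 0 < r /\ (exists x0, V x0 = z0) /\
    forall z, (exists x, V x = z) -> vnorm (vsub z z0) < r ->
      forall eps, 0 < eps -> exists x, vnorm x <= INR k /\ vnorm (vsub (V x) z) < eps.
Proof.
  intros hV hcl. apply NNPP. intro Hn.
  set (Rg := fun z => exists x, V x = z).
  assert (Hstep : forall (k : nat) z0 r, 0 < r -> Rg z0 -> exists q : (Y * RbaseSymbolsImpl.R)%type,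
     Rg (fst q) /\ 0 < snd q /\ vnorm (vsub (fst q) z0) < r / 2 /\ snd q <= r / 2 /\
     forall x, vnorm x <= INR k -> 2 * snd q <= vnorm (vsub (V x) (fst q))).
  { intros k z0 r Hr Hz0. apply NNPP. intro Hq. apply Hn. exists k, z0, (r/2).
    split; [lra|]. split; [exact Hz0|].
    intros z Hz Hzz eps Heps. apply NNPP. intro Hx. apply Hq.
    exists (z, Rmin (eps/2) (r/2)). simpl. split; auto. split.
    { apply Rmin_glb_lt; lra. }
    split; auto. split. apply Rmin_r.
    intros x Hxk. apply Rnot_lt_le. intro Hlt. apply Hx. exists x. split; auto.
    apply Rlt_le_trans with (2 * Rmin (eps / 2) (r / 2)); auto.
    pose proof (Rmin_l (eps/2) (r/2)). lra. }
  set (P := fun (k : nat) (p q : (Y * RbaseSymbolsImpl.R)%type) => Rg (fst q) /\ 0 < snd q /\ vnorm (vsub (fst q) (fst p)) < snd p / 2 /\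
     snd q <= snd p / 2 /\ forall x, vnorm x <= INR k -> 2 * snd q <= vnorm (vsub (V x) (fst q))).
  set (step := fun (k : nat) (p : (Y * RbaseSymbolsImpl.R)%type) => epsilon (inhabits (@vzero Y, 0)) (P k p)).
  set (st := fix st (k : nat) : (Y * RbaseSymbolsImpl.R)%type := match k with O => (vzero, 1) | S k => step k (st k) end).
  assert (Hinv : forall k, Rg (fst (st k)) /\ 0 < snd (st k) /\ P k (st k) (st (S k))).
  { induction k as [|k IHk].
    - assert (H0 : Rg (fst (st O)) /\ 0 < snd (st O)).
      { simpl. split; [|lra]. exists vzero. apply (lin_zero HX HY V (proj1 hV)). }
      split; [apply H0|]. split; [apply H0|].
      simpl (st 1%nat). unfold step. apply epsilon_spec. apply Hstep; apply H0.
    - destruct IHk as [_ [_ HP]]. destruct HP as [HR [Hr _]].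
      split; auto. split; auto.
      change (st (S (S k))) with (step (S k) (st (S k))). unfold step. apply epsilon_spec. apply Hstep; auto. }
  set (z := fun k => fst (st k)). set (r := fun k => snd (st k)).
  assert (Hr_pos : forall k, 0 < r k) by (intro k; apply Hinv).
  assert (Hr_half : forall k, r (S k) <= r k / 2) by (intro k; apply Hinv).
  assert (Hz_close : forall k, vnorm (vsub (z (S k)) (z k)) < r k / 2) by (intro k; apply Hinv).
  assert (Hr_geom : forall k, r k <= (/2) ^ k).
  { induction k as [|k IHk]. unfold r; simpl; lra. simpl. specialize (Hr_half k). lra. }
  assert (Hnest : forall k j, vnorm (vsub (z (k + j)%nat) (z k)) + r (k + j)%nat <= r k).
  { intros k j. induction j as [|j IHj].
    - rewrite Nat.add_0_r, (B_sub_self HY), (B_vnorm_zero HY). lra.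
    - rewrite Nat.add_succ_r. pose proof (B_tri3 HY (z (S (k + j))) (z (k + j)%nat) (z k)).
      specialize (Hz_close (k + j)%nat). specialize (Hr_half (k + j)%nat). lra. }
  assert (Hnest' : forall k n, (k <= n)%nat -> vnorm (vsub (z n) (z k)) <= r k).
  { intros k n Hkn. replace n with (k + (n - k))%nat by lia. specialize (Hnest k (n - k)%nat).
    pose proof (Hr_pos (k + (n - k))%nat). lra. }
  assert (Hcauchy : cauchy z).
  { intros eps He. destruct (geom_small (eps/2)) as [N HN]; [lra|]. exists N. intros n m Hn1 Hm1.
    pose proof (B_tri3 HY (z n) (z N) (z m)). rewrite (B_norm_sub_sym HY (z N) (z m)) in H.
    pose proof (Hnest' N n Hn1). pose proof (Hnest' N m Hm1). specialize (HN N (le_n _)).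
    specialize (Hr_geom N). lra. }
  destruct (B_complete HY z Hcauchy) as [zs Hzs].
  set (u := fun n => epsilon (inhabits (@vzero X)) (fun x => V x = z n)).
  assert (Hu : forall n, V (u n) = z n).
  { intro n. unfold u. apply (epsilon_spec (inhabits (@vzero X)) (fun x => V x = z n)). apply Hinv. }
  destruct (hcl u zs) as [xs Hxs].
  { intros eps He. destruct (Hzs eps He) as [N HN]. exists N. intros n Hn1. rewrite Hu. auto. }
  destruct (nat_above (vnorm xs)) as [k Hk].
  assert (Hd : vnorm (vsub zs (z (S k))) <= r (S k)).
  { apply (lim_dist_le HY z zs (z (S k)) (r (S k)) (S k)); auto. }
  destruct (Hinv k) as [_ [_ [_ [_ [_ [_ HP]]]]]].
  specialize (HP xs (Rlt_le _ _ Hk)). rewrite Hxs in HP. fold (z (S k)) (r (S k)) in HP.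
  specialize (Hr_pos (S k)). lra.
Qed.

Lemma open_approx {X Y : NSpace} (HX : Banach X) (HY : Banach Y) (V : X -> Y) :
  bop V -> closed_range V ->
  exists C, 0 <= C /\ forall z, (exists x, V x = z) -> forall eps, 0 < eps ->
    exists x, vnorm x <= C * vnorm z /\ vnorm (vsub (V x) z) < eps.
Proof.
  intros hV hcl. pose proof (proj1 hV) as hL.
  destruct (baire_step HX HY V hV hcl) as [k [z0 [r [Hr [[x0 Hx0] Hb]]]]].
  assert (B2 : forall z, (exists x, V x = z) -> vnorm z < r -> forall eps, 0 < eps ->
            exists x, vnorm x <= 2 * INR k /\ vnorm (vsub (V x) z) < eps).
  { intros z [xz Hxz] Hz eps He.
    destruct (Hb (vadd z0 z)) with (eps := eps/2) as [x1 [Hx1 Hv1]].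
    { exists (vadd x0 xz). rewrite (lin_add V hL). congruence. }
    { replace (vsub (vadd z0 z) z0) with z by grp HY. auto. }
    lra.
    destruct (Hb z0) with (eps := eps/2) as [x2 [Hx2 Hv2]].
    { exists x0. auto. }
    { rewrite (B_sub_self HY), (B_vnorm_zero HY). auto. }
    lra.
    exists (vsub x1 x2). split.
    - pose proof (B_tri_sub HX x1 x2). lra.
    - rewrite (lin_sub HX HY V hL).
      replace (vsub (vsub (V x1) (V x2)) z) with (vsub (vsub (V x1) (vadd z0 z)) (vsub (V x2) z0)) by grp HY.
      pose proof (B_tri_sub HY (vsub (V x1) (vadd z0 z)) (vsub (V x2) z0)). lra. }
  exists (4 * INR k / r). split.
  { pose proof (pos_INR k). unfold Rdiv; apply Rmult_le_pos; [lra|left; apply Rinv_0_lt_compat; lra]. }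
  intros z [xz Hxz] eps He.
  destruct (Req_dec (vnorm z) 0) as [Ez|Ez].
  - apply (B_norm0 HY) in Ez. rewrite Ez. exists vzero. split.
    + rewrite (B_vnorm_zero HX), (B_vnorm_zero HY). lra.
    + rewrite (lin_zero HX HY V hL), (B_sub_self HY), (B_vnorm_zero HY). auto.
  - pose proof (B_norm_ge0 HY z) as Hz0.
    assert (Hn : 0 < vnorm z) by lra.
    set (n := vnorm z) in *.
    set (t := r / (2 * n)).
    assert (Ht : 0 < t) by (unfold t; apply Rdiv_lt_0_compat; lra).
    destruct (B2 (vscal (rs t) z)) with (eps := eps * t) as [x' [Hx' Hv']].
    { exists (vscal (rs t) xz). rewrite (lin_scal V hL). congruence. }
    { rewrite (B_scal_rs HY), Rabs_pos_eq by lra. fold n. unfold t. field_simplify; lra. }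
    { apply Rmult_lt_0_compat; lra. }
    exists (vscal (rs (/ t)) x'). split.
    + rewrite (B_scal_rs HX), Rabs_pos_eq by (left; apply Rinv_0_lt_compat; lra).
      apply Rle_trans with (/ t * (2 * INR k)).
      * apply Rmult_le_compat_l; auto. left; apply Rinv_0_lt_compat; lra.
      * right. unfold t. field. lra.
    + rewrite (lin_scal V hL).
      replace (vsub (vscal (rs (/ t)) (V x')) z) with (vscal (rs (/ t)) (vsub (V x') (vscal (rs t) z))).
      * rewrite (B_scal_rs HY), Rabs_pos_eq by (left; apply Rinv_0_lt_compat; lra).
        apply Rlt_le_trans with (/ t * (eps * t)).
        { apply Rmult_lt_compat_l; auto. apply Rinv_0_lt_compat; lra. }
        right. field. lra.
      * rewrite (B_scalsub HY), <- (B_scalM HY), rs_mul, Rinv_l, rs_1, (B_scal1 HY) by lra. auto.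
Qed.

Lemma open_exact {X Y : NSpace} (HX : Banach X) (HY : Banach Y) (V : X -> Y) :
  bop V -> closed_range V ->
  exists c, 0 <= c /\ forall x0, exists x', V x' = V x0 /\ vnorm x' <= c * vnorm (V x0).
Proof.
  intros hV hcl. pose proof (proj1 hV) as hL.
  destruct (open_approx HX HY V hV hcl) as [C [HC0 HC]].
  exists (2 * C). split; [lra|]. intro x0.
  set (z := V x0).
  destruct (Req_dec (vnorm z) 0) as [Ez|Ez].
  { exists vzero. split.
    - rewrite (lin_zero HX HY V hL). symmetry. apply (B_norm0 HY). auto.
    - rewrite (B_vnorm_zero HX). fold z. rewrite Ez. lra. }
  pose proof (B_norm_ge0 HY z) as Hz0.
  assert (Hn : 0 < vnorm z) by lra.
  set (nz := vnorm z) in *.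
  set (pickx := fun (m : nat) (w : Y) => epsilon (inhabits (@vzero X))
     (fun x => vnorm x <= C * vnorm w /\ vnorm (vsub (V x) w) < nz * (/2) ^ (S m))).
  set (rem := fix rem (m : nat) : Y := match m with O => z | S m => vsub (rem m) (V (pickx m (rem m))) end).
  set (xs := fun m => pickx m (rem m)).
  assert (Hrem : forall m, (exists x, V x = rem m) /\
     vnorm (xs m) <= C * vnorm (rem m) /\ vnorm (vsub (V (xs m)) (rem m)) < nz * (/2) ^ (S m)).
  { induction m as [|m IHm].
    - assert (HR : exists x, V x = rem O) by (exists x0; reflexivity).
      split; auto. unfold xs, pickx. apply epsilon_spec. apply HC; auto.
      apply Rmult_lt_0_compat; auto. apply pow_lt; lra.
    - destruct IHm as [[a Ha] _].
      assert (HR : exists x, V x = rem (S m)).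
      { exists (vsub a (xs m)). rewrite (lin_sub HX HY V hL), Ha. reflexivity. }
      split; auto. unfold xs, pickx. apply epsilon_spec. apply HC; auto.
      apply Rmult_lt_0_compat; auto. apply pow_lt; lra. }
  assert (Hremb : forall m, vnorm (rem m) <= nz * (/2) ^ m).
  { intro m. destruct m as [|m].
    - simpl. fold nz. lra.
    - change (rem (S m)) with (vsub (rem m) (V (xs m))).
      rewrite (B_norm_sub_sym HY). left. apply Hrem. }
  assert (Hxsb : forall m, vnorm (xs m) <= C * nz * (/2) ^ m).
  { intro m. eapply Rle_trans. apply Hrem. rewrite Rmult_assoc. apply Rmult_le_compat_l; auto. }
  set (s := fix s (N : nat) : X := match N with O => vzero | S N => vadd (s N) (xs N) end).
  assert (HVs : forall N, V (s N) = vsub z (rem N)).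
  { induction N as [|N IHN].
    - simpl. rewrite (lin_zero HX HY V hL). grp HY.
    - change (V (vadd (s N) (xs N)) = vsub z (vsub (rem N) (V (xs N)))).
      rewrite (lin_add V hL), IHN. grp HY. }
  assert (Hsb : forall N j, vnorm (vsub (s (N + j)%nat) (s N)) <= 2 * C * nz * (/2) ^ N - 2 * C * nz * (/2) ^ (N + j)).
  { intros N j. induction j as [|j IHj].
    - rewrite Nat.add_0_r, (B_sub_self HX), (B_vnorm_zero HX). lra.
    - rewrite Nat.add_succ_r.
      change (s (S (N + j))) with (vadd (s (N + j)%nat) (xs (N + j)%nat)).
      replace (vsub (vadd (s (N + j)%nat) (xs (N + j)%nat)) (s N)) with
        (vadd (vsub (s (N + j)%nat) (s N)) (xs (N + j)%nat)) by grp HX.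
      eapply Rle_trans. apply B_tri; auto.
      specialize (Hxsb (N + j)%nat).
      replace ((/2) ^ S (N + j)) with ((/2) ^ (N + j) * / 2) by (simpl; ring).
      lra. }
  assert (Hsb' : forall N n, (N <= n)%nat -> vnorm (vsub (s n) (s N)) <= 2 * C * nz * (/2) ^ N).
  { intros N n Hle. replace n with (N + (n - N))%nat by lia. specialize (Hsb N (n - N)%nat).
    assert (0 <= 2 * C * nz * (/2) ^ (N + (n - N))).
    { apply Rmult_le_pos. apply Rmult_le_pos; lra. apply pow_le; lra. }
    lra. }
  assert (Hcs : cauchy s).
  { intros eps He. destruct (geom_small (eps / (4 * C * nz + 1))) as [N HN].
    { apply Rdiv_lt_0_compat; auto. assert (0 <= C * nz) by (apply Rmult_le_pos; lra). lra. }
    exists N. intros n m Hn1 Hm1.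
    pose proof (B_tri3 HX (s n) (s N) (s m)). rewrite (B_norm_sub_sym HX (s N) (s m)) in H.
    pose proof (Hsb' N n Hn1). pose proof (Hsb' N m Hm1). specialize (HN N (le_n _)).
    assert (0 <= C * nz) by (apply Rmult_le_pos; lra).
    assert (0 < (/2) ^ N) by (apply pow_lt; lra).
    assert (4 * C * nz * (/2) ^ N <= (4 * C * nz + 1) * (/2) ^ N) by nra.
    assert ((4 * C * nz + 1) * (/2) ^ N < eps).
    { apply Rmult_lt_reg_r with (/ (4 * C * nz + 1)). apply Rinv_0_lt_compat; lra.
      rewrite Rmult_comm, <- Rmult_assoc, Rinv_l by lra. lra. }
    lra. }
  destruct (B_complete HX s Hcs) as [xl Hxl].
  exists xl. split.
  - apply (lim_unique HY (fun N => V (s N))).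
    + apply (bop_cont HX HY V s xl hV Hxl).
    + intros eps He. destruct (geom_small (eps / nz)) as [N HN]. apply Rdiv_lt_0_compat; auto.
      exists N. intros n Hn1. rewrite HVs.
      replace (vsub (vsub z (rem n)) z) with (vopp (rem n)) by grp HY.
      rewrite (B_norm_opp HY). eapply Rle_lt_trans. apply Hremb.
      specialize (HN n Hn1). apply Rmult_lt_reg_r with (/ nz). apply Rinv_0_lt_compat; lra.
      rewrite Rmult_comm, <- Rmult_assoc, Rinv_l by lra. lra.
  - apply (lim_norm_le HX s xl); auto. intro n.
    specialize (Hsb' O n (Nat.le_0_l n)). simpl in Hsb'.
    replace (vsub (s n) vzero) with (s n) in Hsb' by grp HX. fold z. fold nz. lra.
Qed.

Lemma core {X Y : NSpace} (HX : Banach X) (HY : Banach Y) (A : X -> Y) (B : Y -> X) (K : Y -> Y) :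
  bop A -> bop B -> is_linear K ->
  (forall u : nat -> Y, (forall n, vnorm (u n) <= 1) -> exists (phi : nat -> nat) l,
      (forall n, (phi n < phi (S n))%nat) /\ converges_to (fun n => K (u (phi n))) l) ->
  (forall y, y = vadd (A (B y)) (K y)) ->
  fredholm (fun x => vsub x (B (A x))) -> infinite_dim Y -> False.
Proof.
  intros hA hB hK Hcomp Hdec [hV [[ws [_ Hker]] [hcl _]]] Hinf.
  set (V := fun x => vsub x (B (A x))) in *.
  destruct (riesz_seq HY (map A ws) Hinf) as [y [Hy1 Hy2]].
  destruct (Hcomp y Hy1) as [phi [l [Hphi Hl]]].
  destruct (open_exact HX HX V hV hcl) as [c [Hc0 Hc]].
  destruct (bop_bound HX A hA) as [MA [HMA0 HMA]].
  destruct (bop_bound HY B hB) as [MB [HMB0 HMB]].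
  assert (HK : forall z, K z = vsub z (A (B z))).
  { intro z. rewrite (Hdec z) at 2. grp HY. }
  assert (HVB : forall z, V (B z) = B (K z)).
  { intro z. unfold V. rewrite HK, (lin_sub HY HX B (proj1 hB)). auto. }
  set (M := MA * c * MB + 1).
  assert (HM : 1 <= M) by (unfold M; assert (0 <= MA * c * MB) by (repeat apply Rmult_le_pos; auto); lra).
  destruct (Hl (/ (4 * M))) as [N HN].
  { apply Rinv_0_lt_compat. lra. }
  set (i := phi N). set (j := phi (S N)).
  assert (Hij : (i < j)%nat) by apply Hphi.
  set (dv := vsub (K (y j)) (K (y i))).
  assert (Hdv : vnorm dv < / (2 * M)).
  { unfold dv. pose proof (B_tri3 HY (K (y j)) l (K (y i))).
    rewrite (B_norm_sub_sym HY l) in H.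
    pose proof (HN (S N) (Nat.le_succ_diag_r N)). pose proof (HN N (le_n N)).
    simpl in H0, H1. fold i j in H0, H1.
    replace (/ (2 * M)) with (/ (4 * M) + / (4 * M)) by (field; lra). lra. }
  set (x := vsub (B (y j)) (B (y i))).
  assert (HVx : V x = B dv).
  { unfold x, dv. rewrite (lin_sub HX HX V (proj1 hV)), !HVB, (lin_sub HY HX B (proj1 hB)). auto. }
  destruct (Hc x) as [x' [Hx'1 Hx'2]].
  assert (Hkx : V (vsub x x') = vzero).
  { rewrite (lin_sub HX HX V (proj1 hV)), Hx'1. apply B_sub_self; auto. }
  destruct (Hker _ Hkx) as [cs Hcs].
  set (w := A (vsub x x')).
  assert (Hw : spanP (map A ws) w).
  { unfold w. rewrite Hcs, (lincomb_map HX HY A (proj1 hA)). apply span_lincomb; auto. }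
  pose proof (Hy2 i j w Hij Hw) as Hsep.
  assert (Heq : vsub (y j) (vadd (y i) w) = vadd (A x') dv).
  { unfold w, x, dv. rewrite (lin_sub HX HY A (proj1 hA)), (lin_sub HX HY A (proj1 hA)).
    pose proof (Hdec (y j)) as Ej. pose proof (Hdec (y i)) as Ei.
    set (bj := A (B (y j))) in *. set (bi := A (B (y i))) in *.
    set (kj := K (y j)) in *. set (ki := K (y i)) in *. set (ax := A x') in *.
    rewrite Ej at 1. rewrite Ei at 1. grp HY. }
  rewrite Heq in Hsep.
  pose proof (B_tri HY (A x') dv).
  pose proof (HMA x'). pose proof (HMB dv).
  rewrite HVx in Hx'2.
  assert (vnorm (A x') <= MA * c * MB * vnorm dv).
  { eapply Rle_trans. apply H0. rewrite !Rmult_assoc. apply Rmult_le_compat_l; auto.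
    eapply Rle_trans. apply Hx'2. apply Rmult_le_compat_l; auto. }
  assert (M * vnorm dv < 1/2).
  { pose proof (B_norm_ge0 HY dv).
    apply Rlt_le_trans with (M * / (2 * M)).
    apply Rmult_lt_compat_l; lra. right. field. lra.  }
  unfold M in H3. lra.
Qed.

Lemma comp_bop {X Y Z : NSpace} (f : X -> Y) (g : Y -> Z) :
  (forall y : Y, 0 <= vnorm y) -> bop f -> bop g -> bop (fun x => g (f x)).
Proof.
  intros Hn [[fa fs] [Mf HMf]] [[ga gs] [Mg HMg]]. split. split.
  - intros x y. rewrite fa, ga. auto.
  - intros a x. rewrite fs, gs. auto.
  - exists (Rabs Mg * Mf). intro x. eapply Rle_trans. apply HMg.
    eapply Rle_trans. apply Rmult_le_compat_r. apply Hn. apply RRle_abs.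
    rewrite Rmult_assoc. apply Rmult_le_compat_l. apply Rabs_pos. apply HMf.
Qed.

Lemma dsum_norm_ge0 (X X' : NSpace) (p : dsum X X') : 0 <= vnorm p.
Proof. simpl. apply sqrt_pos. Qed.

Lemma inl_bop {X X' : NSpace} (HX : Banach X) (HX' : Banach X') :
  bop (fun x : X => ((x, @vzero X') : dsum X X')).
Proof.
  split. split.
  - intros x y. simpl. rewrite (B_add0 HX'). auto.
  - intros a x. simpl. rewrite (B_scalv0 HX'). auto.
  - exists 1. intro x. cbn [vnorm vadd vscal dsum fst snd]. rewrite (B_vnorm_zero HX').
    replace (vnorm x ^ 2 + 0 ^ 2) with (vnorm x ^ 2) by ring. rewrite sqrt_pow2. lra. apply B_norm_ge0; auto.
Qed.

Lemma inr_bop {X X' : NSpace} (HX : Banach X) (HX' : Banach X') :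
  bop (fun x : X' => ((@vzero X, x) : dsum X X')).
Proof.
  split. split.
  - intros x y. simpl. rewrite (B_add0 HX). auto.
  - intros a x. simpl. rewrite (B_scalv0 HX). auto.
  - exists 1. intro x. cbn [vnorm vadd vscal dsum fst snd]. rewrite (B_vnorm_zero HX).
    replace (0 ^ 2 + vnorm x ^ 2) with (vnorm x ^ 2) by ring. rewrite sqrt_pow2. lra. apply B_norm_ge0; auto.
Qed.

Lemma fst_bop {X X' : NSpace} (HX : Banach X) (HX' : Banach X') :
  bop (fun p : dsum X X' => (fst p : X)).
Proof.
  split. split; intros; reflexivity.
  exists 1. intros [x x']. cbn [vnorm vadd vscal dsum fst snd]. rewrite Rmult_1_l.
  rewrite <- (sqrt_pow2 (vnorm x)) at 1 by (apply B_norm_ge0; auto).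
  apply sqrt_le_1_alt. pose proof (pow2_ge_0 (vnorm x')). lra.
Qed.

Lemma snd_bop {X X' : NSpace} (HX : Banach X) (HX' : Banach X') :
  bop (fun p : dsum X X' => (snd p : X')).
Proof.
  split. split; intros; reflexivity.
  exists 1. intros [x x']. cbn [vnorm vadd vscal dsum fst snd]. rewrite Rmult_1_l.
  rewrite <- (sqrt_pow2 (vnorm x')) at 1 by (apply B_norm_ge0; auto).
  apply sqrt_le_1_alt. pose proof (pow2_ge_0 (vnorm x)). lra.
Qed.

Theorem theorem5p2 (X Y : NSpace) :
  Banach X -> Banach Y -> infinite_dim X -> infinite_dim Y ->
  ess_incomparable X Y ->
  forall (S : Y -> Y) (T : X -> X),
    compact_op S -> bop T -> ~ equiv_after_ext T S.
Proof.
  intros HX HY _ HinfY Hess S T [hS HS] hT [X' [Y' [HX' [HY' [E [F [hE [[hF [H [hH [FH HF]]]] Hid]]]]]]]].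
  set (A := fun x : X => (fst (F ((x, @vzero X') : dsum X X')) : Y)).
  set (B := fun y : Y => (fst (H ((y, @vzero Y') : dsum Y Y')) : X)).
  set (Lm := fun z : Y => (fst (F ((@vzero X, snd (E ((z, @vzero Y') : dsum Y Y'))) : dsum X X')) : Y)).
  set (K := fun y => Lm (S y)).
  assert (hA : bop A).
  { unfold A. apply (comp_bop (fun x => F (x, vzero)) (fun p => fst p)).
    apply dsum_norm_ge0. apply (comp_bop (fun x : X => ((x, @vzero X') : dsum X X')) F).
    apply dsum_norm_ge0. apply inl_bop; auto. auto. apply fst_bop; auto. }
  assert (hB : bop B).
  { unfold B. apply (comp_bop (fun x => H (x, vzero)) (fun p => fst p)).
    apply dsum_norm_ge0. apply (comp_bop (fun x : Y => ((x, @vzero Y') : dsum Y Y')) H).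
    apply dsum_norm_ge0. apply inl_bop; auto. auto. apply fst_bop; auto. }
  assert (hLm : bop Lm).
  { unfold Lm.
    apply (comp_bop (fun z : Y => F ((@vzero X, snd (E ((z, @vzero Y') : dsum Y Y'))) : dsum X X')) (fun p => fst p)).
    apply dsum_norm_ge0.
    apply (comp_bop (fun z : Y => (snd (E ((z, @vzero Y') : dsum Y Y')) : X')) (fun x' => F ((@vzero X, x') : dsum X X'))).
    apply (B_norm_ge0 HX').
    apply (comp_bop (fun z : Y => E ((z, @vzero Y') : dsum Y Y')) (fun p => snd p)).
    apply dsum_norm_ge0.
    apply (comp_bop (fun x : Y => ((x, @vzero Y') : dsum Y Y')) E).
    apply dsum_norm_ge0. apply inl_bop; auto. exact (proj1 hE). apply snd_bop; auto.
    apply (comp_bop (fun x' : X' => ((@vzero X, x') : dsum X X')) F).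
    apply dsum_norm_ge0. apply inr_bop; auto. auto. apply fst_bop; auto. }
  assert (hK : is_linear K).
  { destruct hLm as [[La Ls] _]. destruct hS as [[Sa Ss] _]. split.
    - intros x y. unfold K. rewrite Sa, La. auto.
    - intros a x. unfold K. rewrite Ss, Ls. auto. }
  assert (Hcomp : forall u : nat -> Y, (forall n, vnorm (u n) <= 1) -> exists (phi : nat -> nat) l,
      (forall n, (phi n < phi (Nat.succ n))%nat) /\ converges_to (fun n => K (u (phi n))) l).
  { intros u Hu. destruct (HS u) as [phi [l [Hphi Hl]]]. exists 1. auto.
    exists phi, (Lm l). split; auto. apply (bop_cont HY HY Lm (fun n => S (u (phi n))) l hLm Hl). }
  assert (Hdec : forall y, y = vadd (A (B y)) (K y)).
  { intro y. set (p := H ((y, @vzero Y') : dsum Y Y')).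
    assert (Fp : F p = (y, vzero)) by (unfold p; apply FH).
    pose proof (Hid p) as Hp. rewrite Fp in Hp. unfold diag_id in Hp. simpl in Hp.
    assert (Hsnd : snd p = snd (E ((S y, @vzero Y') : dsum Y Y'))).
    { rewrite <- Hp. reflexivity. }
    assert (Hsplit : p = vadd ((fst p, @vzero X') : dsum X X') ((@vzero X, snd p) : dsum X X')).
    { destruct p as [p1 p2]. simpl. rewrite (B_add0 HX), (B_add0l HX'). auto. }
    assert (Hy : y = fst (F p)) by (rewrite Fp; reflexivity).
    rewrite Hy at 1. rewrite Hsplit, (lin_add F (proj1 hF)).
    simpl. unfold A, B, K, Lm. fold p. rewrite Hsnd. reflexivity. }
  destruct (Hess A hA) as [_ Hfr].
  exact (core HX HY A B K hA hB hK Hcomp Hdec (Hfr B hB) HinfY).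
Qed.
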